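(* Let $N\ge1$, $f:\mathbb{N}^N\to\mathbb{N}$, $k\ge0$ and $\boldsymbol{\ell}=(\ell_1,\dots,\ell_N)\in\mathbb{N}^N$. For $i=1,\dots,N$ let $d_i=\gcd(k,\ell_i)$ and $t_i=k/d_i$. Then $\binom{k}{\boldsymbol{\ell}}_f\equiv0\pmod{t_i}$ for all $i=1,\dots,N$; equivalently, $\binom{k}{\boldsymbol{\ell}}_f\equiv 0\pmod M$, where $M=\operatorname{lcm}(t_1,\dots,t_N)$ (i.e. $M=p_1^{m_1}\cdots p_R^{m_R}$ where $t_i=p_1^{(a_i)_1}\cdots p_R^{(a_i)_R}$ and $m_j=\max_i (a_i)_j$).
   Context: $\mathbb{N}=\{0,1,2,\dots\}$. For $k\ge0$ and $\mathbf{x}\in\mathbb{N}^N$, $\binom{k}{\mathbf{x}}_f=\sum_{\mathbf{m}_1+\cdots+\mathbf{m}_k=\mathbf{x}} f(\mathbf{m}_1)\cdots f(\mathbf{m}_k)$ over tuples of vectors in $\mathbb{N}^N$. *)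

(* Defs.v *)
From mathcomp Require Import all_boot.
Set Implicit Arguments. Unset Strict Implicit. Unset Printing Implicit Defensive.

Definition vecN (N : nat) := {ffun 'I_N -> nat}.

(* Generalized multinomial coefficient
   binom_f f k x = \sum_{m_1+...+m_k = x} f(m_1) ... f(m_k),
   the sum running over all k-tuples (m_1,...,m_k) of vectors of N^N.
   Every such tuple has entries m_i(j) <= x(j) < (\sum_j x j).+1, so summing
   over tuples with entries in 'I_((\sum_j x j).+1) enumerates all of them. *)
Definition binom_f (N : nat) (f : vecN N -> nat) (k : nat) (x : vecN N) : nat :=
  \sum_(t : {ffun 'I_k -> {ffun 'I_N -> 'I_((\sum_(j < N) x j).+1)}}
         | [forall j : 'I_N, \sum_(i < k) (t i j : nat) == x j])
     \prod_(i < k) f [ffun j => (t i j : nat)].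

(* Main.v *)
Require Import Defs.
From mathcomp Require Import all_boot perm.
Lemma key N (f : vecN N -> nat) k (l : vecN N) (j : 'I_N) :
  exists X, l j * binom_f f k l = k * X.
Proof.
rewrite /binom_f.
set n := (\sum_(j0 < N) l j0).+1.
set P := (fun t : {ffun 'I_k -> {ffun 'I_N -> 'I_n}} =>
   [forall j0 : 'I_N, \sum_(i < k) (t i j0 : nat) == l j0]).
set W := (fun t : {ffun 'I_k -> {ffun 'I_N -> 'I_n}} =>
   \prod_(i < k) f [ffun j0 => (t i j0 : nat)]).
have -> : l j * \sum_(t | P t) W t = \sum_(i < k) \sum_(t | P t) (t i j : nat) * W t.
  rewrite big_distrr exchange_big /=; apply: eq_bigr => t Pt.
  rewrite -big_distrl /=; congr (_ * _).
  by move/forallP: Pt => /(_ j) /eqP.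
case: (posnP k) => [k0|kpos].
  by exists 0; rewrite muln0 big1 // => -[m hm] _; exfalso; move: hm; rewrite k0.
pose i0 := Ordinal kpos.
exists (\sum_(t | P t) (t i0 j : nat) * W t).
rewrite (@eq_bigr _ _ _ 'I_k _ _ _ (fun _ => \sum_(t | P t) (t i0 j : nat) * W t)).
  by rewrite sum_nat_const card_ord.
move=> i _.
pose s := tperm i0 i.
pose h := fun t : {ffun 'I_k -> {ffun 'I_N -> 'I_n}} => [ffun a => t (s a)].
have hK : cancel h h by move=> t; apply/ffunP => a; rewrite !ffunE tpermK.
rewrite (reindex_inj (can_inj hK)) /=.
apply: eq_big => [t|t Pt].
  rewrite /P; apply: eq_forallb => j0.
  rewrite (reindex_inj (@perm_inj _ s)) /=.
  by under eq_bigr do rewrite /h ffunE tpermK.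
rewrite /W (reindex_inj (@perm_inj _ s)) /= /h ffunE tpermR.
congr (_ * _); apply: eq_bigr => a _; congr f; apply/ffunP => b.
by rewrite !ffunE tpermK.
Qed.
Lemma numlem k l B X : 0 < gcdn k l -> l * B = k * X -> k %/ gcdn k l %| B.
Proof.
move=> d0 E.
set d := gcdn k l in d0 *.
have hk : k = k %/ d * d by rewrite divnK // dvdn_gcdl.
have hl : l = l %/ d * d by rewrite divnK // dvdn_gcdr.
have cop : coprime (k %/ d) (l %/ d).
  rewrite /coprime -(@eqn_pmul2l d) //.
  by rewrite muln1 muln_gcdr ![d * _]mulnC -hk -hl.
rewrite -(Gauss_dvdr _ cop).
have E2 : l %/ d * B = k %/ d * X.
  apply/eqP; rewrite -(@eqn_pmul2l d) //; apply/eqP.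
  by rewrite !mulnA ![d * _]mulnC -hk -hl.
by rewrite E2 dvdn_mulr.
Qed.

Theorem theorem11 (N : nat) (hN : 0 < N) (f : vecN N -> nat) (k : nat)
    (l : vecN N) :
  (forall i : 'I_N, 0 < gcdn k (l i) ->
     k %/ gcdn k (l i) %| binom_f f k l) /\
  ((forall i : 'I_N, 0 < gcdn k (l i)) ->
     \big[lcmn/1]_(i < N) (k %/ gcdn k (l i)) %| binom_f f k l).
Proof.
have H1 : forall i : 'I_N, 0 < gcdn k (l i) -> k %/ gcdn k (l i) %| binom_f f k l.
  move=> i hi; have [X hX] := key N f k l i; exact: numlem hi hX.
split=> // H; apply/dvdn_biglcmP => i _; exact: H1.
Qed.
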